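(* Let $A,B\in\mathbb{R}^{m\times n}$ and $b\in\mathbb{R}^m$ with $\operatorname{rank}(B) = m$ and $m<n$, and let $1\le p\le\infty$. If $B^\dagger b\leq0$, $B^\dagger A\geq0$ and $\|B^\dagger A\|_p<1$, then the equation $Ax-B|x|=b$ has at least one nonnegative solution.
   Context: $B^\dagger$ is the Moore–Penrose inverse; $|x|$ is the entrywise absolute value; vector/matrix inequalities are entrywise; $\|\cdot\|_p$ on matrices is the operator norm induced by the vector $p$-norm. *)

(* Defs.v *)
From HB Require Import structures.
From mathcomp Require Import all_boot all_order all_algebra.
From mathcomp Require Import all_classical all_reals.
From mathcomp Require Import ereal exp.
Set Implicit Arguments. Unset Strict Implicit. Unset Printing Implicit Defensive.
Import Order.TTheory GRing.Theory Num.Theory.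
Local Open Scope ring_scope.

Definition is_MP_inverse (R : realType) (m n : nat)
  (B : 'M[R]_(m, n)) (X : 'M[R]_(n, m)) : Prop :=
  [/\ B *m X *m B = B, X *m B *m X = X,
      (B *m X)^T = B *m X & (X *m B)^T = X *m B].

Definition mabs (R : realType) (m n : nat) (M : 'M[R]_(m, n)) : 'M[R]_(m, n) :=
  map_mx (fun t => `|t|) M.

Definition vnorm (R : realType) (k : nat) (p : \bar R) (x : 'cV[R]_k) : R :=
  match p with
  | EFin r => (\sum_(i < k) `|x i 0| `^ r) `^ r^-1
  | +oo%E => \big[Num.max/0]_(i < k) `|x i 0|
  | -oo%E => 0
  end.

Definition opnorm (R : realType) (m n : nat) (p : \bar R) (M : 'M[R]_(m, n)) : R :=
  sup [set vnorm p (M *m x) | x in [set x : 'cV[R]_n | vnorm p x <= 1]].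

(* Main.v *)
Require Import Defs.
From HB Require Import structures.
From mathcomp Require Import all_boot all_order all_algebra.
From mathcomp Require Import all_classical all_reals.
From mathcomp Require Import ereal exp.
Import Order.TTheory GRing.Theory Num.Theory.
Local Open Scope ring_scope.
Set Implicit Arguments. Unset Strict Implicit.

Lemma vnorm_mono (R : realType) (p : \bar R) k (u v : 'cV[R]_k) :
  (1 <= p)%E -> (forall i, `|u i 0| <= `|v i 0|) -> vnorm p u <= vnorm p v.
Proof.
case: p => [r| |] hp huv; last by rewrite leeNy_eq in hp.
- rewrite /= lee_fin in hp *.
  have r0 : 0 < r by apply: lt_le_trans hp.
  have ri : 0 <= r^-1 by rewrite invr_ge0 ltW.
  apply: ge0_ler_powR => //; rewrite ?nnegrE;
    try by apply: sumr_ge0 => i _; apply: powR_ge0.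
  apply: ler_sum => i _; apply: ge0_ler_powR; rewrite ?nnegrE //; exact: ltW.
- by rewrite /=; apply: le_bigmax2 => i _; apply: huv.
Qed.

Lemma vnorm_coord (R : realType) (p : \bar R) k (x : 'cV[R]_k) j :
  (1 <= p)%E -> `|x j 0| <= vnorm p x.
Proof.
case: p => [r| |] hp; last by rewrite leeNy_eq in hp.
- rewrite /= lee_fin in hp *.
  have r0 : 0 < r by apply: lt_le_trans hp.
  have -> : `|x j 0| = (`|x j 0| `^ r) `^ r^-1.
    by rewrite -powRrM mulfV ?gt_eqF // powRr1.
  have ri : 0 <= r^-1 by rewrite invr_ge0 ltW.
  have S0 : 0 <= \sum_(i < k) `|x i 0| `^ r by apply: sumr_ge0 => i _; apply: powR_ge0.
  apply: ge0_ler_powR => //; rewrite ?nnegrE ?powR_ge0 //.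
  rewrite (bigD1 j) //= lerDl; apply: sumr_ge0 => i _; apply: powR_ge0.
- rewrite /=; exact: (le_bigmax 0 (fun i => `|x i 0|) j).
Qed.

Lemma vnorm_scale (R : realType) (p : \bar R) k (x : 'cV[R]_k) t :
  (1 <= p)%E -> 0 <= t -> vnorm p (t *: x) = t * vnorm p x.
Proof.
case: p => [r| |] hp t0; last by rewrite leeNy_eq in hp.
- rewrite /= lee_fin in hp *.
  have r0 : 0 < r by apply: lt_le_trans hp.
  under eq_bigr => i _ do rewrite mxE normrM (ger0_norm t0) powRM //.
  rewrite -mulr_sumr powRM ?powR_ge0 //; last by apply: sumr_ge0 => i _; apply: powR_ge0.
  by rewrite -powRrM mulfV ?gt_eqF // powRr1.
- rewrite /=; apply: (big_rec2 (fun a b => a = t * b)); first by rewrite mulr0.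
  by move=> i a b _ ->; rewrite mxE normrM (ger0_norm t0) maxr_pMr.
Qed.

Lemma vnorm_opnorm (R : realType) (p : \bar R) m n (M : 'M[R]_(m, n)) (w : 'cV[R]_n) :
  (1 <= p)%E -> vnorm p w <= 1 -> vnorm p (M *m w) <= opnorm p M.
Proof.
move=> hp hw; rewrite /opnorm; apply: sup_upper_bound; last by exists w.
split; first by exists (vnorm p (M *m w)); exists w.
exists (vnorm p (\col_i (\sum_j `|M i j|) : 'cV[R]_m)) => _ [x hx <-].
apply: vnorm_mono => // i; rewrite !mxE.
rewrite [X in _ <= X]ger0_norm; last by apply: sumr_ge0 => j _.
apply: le_trans (ler_norm_sum _ _ _) _; apply: ler_sum => j _.
rewrite normrM; apply: ler_piMr => //.
have hc := vnorm_coord x j hp; exact: (le_trans hc hx).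
Qed.

Lemma key (R : realType) (p : \bar R) n (M : 'M[R]_n) (u : 'cV[R]_n) :
  (1 <= p)%E -> (forall i j, 0 <= M i j) -> opnorm p M < 1 ->
  (forall i, 0 <= u i 0) -> (forall i, u i 0 <= (M *m u) i 0) -> u = 0.
Proof.
move=> hp M0 hM u0 uM.
apply: contrapT => /eqP unz.
have [i ui] : exists i, u i 0 != 0.
  apply: contrapT => H; move/eqP: unz; apply; apply/matrixP => a b.
  rewrite (ord1 b) mxE; apply/eqP; apply: contrapT => /negP h; apply: H; by exists a.
set s := vnorm p u.
have s0 : 0 < s by apply: lt_le_trans (vnorm_coord u i hp); rewrite normr_gt0.
have si0 : 0 <= s^-1 by rewrite invr_ge0 ltW.
have w1 : vnorm p (s^-1 *: u) = 1 by rewrite vnorm_scale // mulVf ?gt_eqF.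
have w1' : vnorm p (s^-1 *: u) <= 1 by rewrite w1.
have := vnorm_opnorm M hp w1'.
have : vnorm p (s^-1 *: u) <= vnorm p (M *m (s^-1 *: u)).
  apply: vnorm_mono => // a; rewrite -scalemxAr !mxE.
  have ua := u0 a; have Mua := le_trans ua (uM a).
  move: Mua (uM a); rewrite !mxE => Mua uMa.
  by rewrite !ger0_norm ?mulr_ge0 //; apply: ler_wpM2l.
move=> h1 h2; rewrite w1 in h1.
by move: (le_lt_trans (le_trans h1 h2) hM); rewrite ltxx.
Qed.

Theorem corollary3p5 (R : realType) (m n : nat)
  (A B : 'M[R]_(m, n)) (b : 'cV[R]_m) (p : \bar R) (Bdag : 'M[R]_(n, m)) :
  \rank B = m -> (m < n)%N -> (1 <= p)%E ->
  is_MP_inverse B Bdag ->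
  (forall i j, (Bdag *m b) i j <= 0) ->
  (forall i j, 0 <= (Bdag *m A) i j) ->
  opnorm p (Bdag *m A) < 1 ->
  exists x : 'cV[R]_n, (forall i j, 0 <= x i j) /\ A *m x - B *m mabs x = b.
Proof.
move=> rB _ hp [BXB _ _ _] hb hA hM.
have BX : B *m Bdag = 1%:M.
  have rf : row_free B by rewrite /row_free rB.
  apply/eqP; rewrite -subr_eq0 -(mulmx_free_eq0 _ rf).
  by rewrite mulmxBl BXB mul1mx subrr.
set M := Bdag *m A.
set c := - (Bdag *m b).
set N : 'M[R]_n := 1%:M - M.
have Nu : N \in unitmx.
  rewrite unitmxE unitfE -det_tr; apply/negP => /det0P [v vnz vN].
  set z := v^T.
  have Nz : N *m z = 0 by rewrite /z -[N]trmxK -trmx_mul vN trmx0.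
  have zM : z = M *m z.
    by apply/eqP; rewrite -subr_eq0 -{1}[z]mul1mx -mulmxBl; apply/eqP.
  have u0 := key hp hA hM (u := mabs z).
  have : mabs z = 0.
    apply: u0 => i; first by rewrite mxE.
    rewrite [mabs z i 0]mxE [(M *m mabs z) i 0]mxE {1}zM [(M *m z) i 0]mxE.
    apply: le_trans (ler_norm_sum _ _ _) _.
    apply: ler_sum => j _; rewrite normrM [mabs z j 0]mxE ger0_norm //.
  move=> /matrixP zz; move/eqP: vnz; apply; apply/matrixP => i j.
  have := zz j i; rewrite !mxE => /eqP; rewrite normr_eq0 => /eqP.
  by [].
set x := invmx N *m c.
have Nx : N *m x = c by rewrite /x mulmxA (mulmxV Nu) mul1mx.
have xe : x = M *m x + c.
  by rewrite -Nx /N mulmxBl mul1mx addrC subrK.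
clearbody x.
set u : 'cV[R]_n := \col_i Num.max 0 (- x i 0).
have uz : u = 0.
  apply: (key hp hA hM).
    by move=> i; rewrite mxE le_max lexx.
  move=> i; rewrite [u i 0]mxE ge_max.
  have Mu0 : 0 <= (M *m u) i 0.
    rewrite mxE; apply: sumr_ge0 => j _; apply: mulr_ge0 => //.
    by rewrite mxE le_max lexx.
  rewrite Mu0 /=.
  have -> : - x i 0 = \sum_j M i j * (- x j 0) + (Bdag *m b) i 0.
    rewrite {1}xe [(M *m x + c) i 0]mxE [(M *m x) i 0]mxE /c [(- (Bdag *m b)) i 0]mxE.
    rewrite opprD opprK -sumrN; congr (_ + _); apply: eq_bigr => j _; by rewrite mulrN.
  apply: (@le_trans _ _ (\sum_j M i j * - x j 0)); first by rewrite gerDl; apply: hb.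
  rewrite mxE; apply: ler_sum => j _; apply: ler_wpM2l => //.
  by rewrite [u j 0]mxE le_max lexx orbT.
have x0 : forall i j, 0 <= x i j.
  move=> i j; rewrite (ord1 j).
  have := congr1 (fun U : 'cV[R]_n => U i 0) uz; rewrite /= [u i 0]mxE mxE => /eqP.
  rewrite ?mxE => /eqP h; by rewrite -oppr_le0 -h le_max lexx orbT.
exists x; split => //.
have -> : mabs x = x.
  by apply/matrixP => i j; rewrite mxE ger0_norm.
rewrite {2}xe mulmxDr mulmxA /M mulmxA BX mul1mx /c mulmxN mulmxA BX mul1mx.
by rewrite opprD opprK addrA subrr add0r.
Qed.
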